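(* Let $H=\Theta(2,4,4)$ and $G=H^2$. Then $G$ is equitably $5$-choosable.
   Context: $\Theta(l_1,\ldots,l_m)$ denotes the graph consisting of two vertices $u,w$ joined by $m$ internally disjoint paths of lengths $l_1,\ldots,l_m$. For a graph $H$, $H^2$ has vertex set $V(H)$ with two vertices adjacent iff their distance in $H$ is 1 or 2. A $k$-assignment $L$ assigns to each vertex a set of exactly $k$ colors; an equitable $L$-coloring of $G$ is a proper coloring $f$ with $f(v)\in L(v)$ such that no color is used more than $\lceil |V(G)|/k\rceil$ times; $G$ is equitably $k$-choosable if it has an equitable $L$-coloring for every $k$-assignment $L$. *)

(* Defs.v *)
From mathcomp Require Import all_boot.
Set Implicit Arguments. Unset Strict Implicit. Unset Printing Implicit Defensive.

Definition sq_graph (V : finType) (e : rel V) : rel V :=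
  fun x y => (x != y) && (e x y || [exists z, e x z && e z y]).

Definition ceil_div (n k : nat) : nat := (n + k.-1) %/ k.

Definition k_assignment (V : finType) (C : eqType) (k : nat) (L : V -> seq C) : Prop :=
  forall v, uniq (L v) /\ size (L v) = k.

Definition equitable_L_coloring (V : finType) (e : rel V) (C : eqType) (k : nat)
    (L : V -> seq C) (f : V -> C) : Prop :=
  [/\ forall v, f v \in L v,
      forall x y, e x y -> f x != f y
    & forall c : C, #|[pred v | f v == c]| <= ceil_div #|V| k].

Definition equitably_choosable (V : finType) (e : rel V) (k : nat) : Prop :=
  forall (C : eqType) (L : V -> seq C), k_assignment k L ->
    exists f : V -> C, equitable_L_coloring e k L f.

(* Theta(2,4,4) on vertex set 'I_9: u = 0, w = 1;
   path of length 2:  0 - 2 - 1;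
   path of length 4:  0 - 3 - 4 - 5 - 1;
   path of length 4:  0 - 6 - 7 - 8 - 1. *)
Definition theta244_edges : seq (nat * nat) :=
  [:: (0, 2); (2, 1);
      (0, 3); (3, 4); (4, 5); (5, 1);
      (0, 6); (6, 7); (7, 8); (8, 1)].

Definition theta244 : rel 'I_9 :=
  fun x y => ((val x, val y) \in theta244_edges) || ((val y, val x) \in theta244_edges).

(* Main.v *)
Require Import Defs.
From mathcomp Require Import all_boot.
Definition E9 : seq (nat*nat) := [:: (0,1);(0,2);(0,3);(0,4);(0,6);(0,7);(1,2);(1,4);(1,5);(1,7);(1,8);(2,3);(2,5);(2,6);(2,8);(3,4);(3,5);(3,6);(4,5);(5,8);(6,7);(6,8);(7,8)].
Definition tnat (m n : nat) := ((m, n) \in theta244_edges) || ((n, m) \in theta244_edges).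
Definition sqnat m n := (m != n) && (tnat m n || has (fun k => tnat m k && tnat k n) (iota 0 9)).
Lemma sq_nat (x y : 'I_9) : sq_graph theta244 x y = sqnat (val x) (val y).
Proof.
rewrite /sq_graph /sqnat; congr (_ && (_ || _)).
apply/existsP/hasP => [[z Hz]|[k Hk H]].
- exists (val z) => //; by rewrite mem_iota ltn_ord.
- have Hk9 : k < 9 by move: Hk; rewrite mem_iota.
  by exists (Ordinal Hk9).
Qed.
Lemma sq_edges_nat : all (fun m => all (fun n => sqnat m n ==> (((m, n) \in E9) || ((n, m) \in E9))) (iota 0 9)) (iota 0 9).
Proof. vm_compute. reflexivity. Qed.
Lemma sq_edges (x y : 'I_9) : sq_graph theta244 x y -> ((val x, val y) \in E9) || ((val y, val x) \in E9).
Proof.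
rewrite sq_nat; move/allP: sq_edges_nat => /(_ (val x)); rewrite mem_iota ltn_ord => /(_ isT).
move/allP => /(_ (val y)); rewrite mem_iota ltn_ord => /(_ isT). by move/implyP.
Qed.
Lemma card_nat9 (P : nat -> bool) : #|[pred v : 'I_9 | P (val v)]| = count id (map P (iota 0 9)).
Proof.
rewrite count_map -val_enum_ord count_map cardE /enum_mem size_filter.
rewrite (@eq_filter _ _ predT) // filter_predT; exact: eq_count.
Qed.
Lemma count9 : forall b0 b1 b2 b3 b4 b5 b6 b7 b8 : bool,
  ~~ (b0 && b1) -> ~~ (b0 && b2) -> ~~ (b0 && b3) -> ~~ (b0 && b4) -> ~~ (b0 && b6) -> ~~ (b0 && b7) ->
  ~~ (b1 && b2) -> ~~ (b1 && b4) -> ~~ (b1 && b5) -> ~~ (b1 && b7) -> ~~ (b1 && b8) ->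
  ~~ (b2 && b3) -> ~~ (b2 && b5) -> ~~ (b2 && b6) -> ~~ (b2 && b8) ->
  ~~ (b3 && b4) -> ~~ (b3 && b5) -> ~~ (b3 && b6) -> ~~ (b4 && b5) -> ~~ (b5 && b8) ->
  ~~ (b6 && b7) -> ~~ (b6 && b8) -> ~~ (b7 && b8) -> ~~ [&& b2, b4 & b7] ->
  count id [:: b0; b1; b2; b3; b4; b5; b6; b7; b8] <= 2.
Proof. by do 9 case. Qed.

Definition mkF {C : Type} (a0 a1 a2 a3 a4 a5 a6 a7 a8 : C) (n : nat) : C :=
  match n with 0 => a0 | 1 => a1 | 2 => a2 | 3 => a3 | 4 => a4 | 5 => a5
  | 6 => a6 | 7 => a7 | _ => a8 end.

Lemma pick (C : eqType) (l s : seq C) : uniq l -> size s < size l -> exists2 x, x \in l & x \notin s.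
Proof.
move=> Ul Hs; case: (boolP (all (mem s) l)) => H.
- have := uniq_leq_size Ul (fun x Hx => (allP H) x Hx). by rewrite leqNgt Hs.
- by move/allPn: H => [x Hx Hn]; exists x.
Qed.

Lemma neqc (C : eqType) (a b c : C) : a != b -> ~~ ((a == c) && (b == c)).
Proof. by apply: contra => /andP[/eqP -> /eqP ->]. Qed.

Lemma complete (C : eqType) (L : 'I_9 -> seq C) : k_assignment 5 L ->
  forall g2 g0 g5, g2 \in L (inord 2) -> g0 \in L (inord 0) -> g5 \in L (inord 5) ->
  g0 != g2 -> g5 != g2 ->
  (forall g1 g3, exists2 x, x \in L (inord 4) & x \notin [:: g0; g1; g3; g5; g2]) ->
  exists f, equitable_L_coloring (sq_graph theta244) 5 L f.
Proof.
move=> HL g2 g0 g5 H2 H0 H5 n02 n52 Q.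
have P v s : size s < 5 -> exists2 x, x \in L v & x \notin s.
  by move=> Hs; apply: pick; [exact: (HL v).1 | rewrite (HL v).2].
have [g1 H1 N1] := P (inord 1) [:: g2; g0; g5] isT.
have [g3 H3 N3] := P (inord 3) [:: g2; g0; g5] isT.
have [g6 H6 N6] := P (inord 6) [:: g2; g0; g3] isT.
have [g8 H8 N8] := P (inord 8) [:: g2; g1; g5; g6] isT.
have [g4 H4 N4] := Q g1 g3.
have [g7 H7 N7] := P (inord 7) [:: g0; g1; g6; g8] isT.
move: N1 N3 N6 N8 N4 N7; rewrite !inE !negb_or.
move=> /and3P[n12 n10 n15] /and3P[n32 n30 n35] /and3P[n62 n60 n63]
  /and4P[n82 n81 n85 n86] /and5P[n40 n41 n43 n45 n42] /and4P[n70 n71 n76 n78].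
pose F := mkF g0 g1 g2 g3 g4 g5 g6 g7 g8.
have Hall : all (fun p => F p.1 != F p.2) E9.
  rewrite /= /F /=.
  by repeat (apply/andP; split); try done; solve [assumption | rewrite eq_sym; assumption].
exists (fun v => F (val v)); split.
- move=> [m Hm] /=.
  rewrite (_ : Ordinal Hm = inord m); last by apply/val_inj; rewrite /= inordK.
  by do 9 (case: m Hm => [|m] Hm; first by rewrite /F /=).
- move=> x y /sq_edges /orP[] /(allP Hall) //=; by rewrite eq_sym.
- move=> c; rewrite card_ord /ceil_div /= (card_nat9 (fun n => F n == c)) /=.
  rewrite /F /=; apply: count9; try (apply: neqc; solve [assumption | rewrite eq_sym; assumption]).
  apply/negP => /and3P[/eqP E2 /eqP E4 _]; move/eqP: n42; apply; by rewrite E2 E4.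
Qed.

Theorem lemma3p5 : equitably_choosable (sq_graph theta244) 5.
Proof.
move=> C L HL.
have P v s : size s < 5 -> exists2 x, x \in L v & x \notin s.
  by move=> Hs; apply: pick; [exact: (HL v).1 | rewrite (HL v).2].
case: (boolP (all (mem (L (inord 4))) (L (inord 2)))) => [A2|/allPn [c Hc Hc4]]; last first.
  have [g0 H0 N0] := P (inord 0) [:: c] isT.
  have [g5 H5 N5] := P (inord 5) [:: c] isT.
  apply: (@complete _ _ HL _ _ _ Hc H0 H5); [by move: N0; rewrite inE | by move: N5; rewrite inE |].
  move=> g1 g3; have [x Hx Nx] := P (inord 4) [:: g0; g1; g3; g5] isT.
  exists x => //; have xc : x != c by apply: contraNneq Hc4 => <-.
  by move: Nx; rewrite !inE !negb_or => /and4P[-> -> -> ->].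
have [c Hc _] := P (inord 2) [::] isT.
have Hc4 : c \in L (inord 4) by apply: (allP A2).
case: (boolP (all (mem (L (inord 4))) (L (inord 0)))) => [A0|/allPn [y Hy Hy4]]; last first.
  have yc : y != c by apply: contraNneq Hy4 => ->.
  have [g5 H5 N5] := P (inord 5) [:: c] isT.
  apply: (@complete _ _ HL _ _ _ Hc Hy H5 yc); [by move: N5; rewrite inE |].
  move=> g1 g3; have [x Hx Nx] := P (inord 4) [:: g1; g3; g5; c] isT.
  exists x => //; have xy : x != y by apply: contraNneq Hy4 => <-.
  by move: Nx; rewrite !inE !negb_or => /and4P[-> -> -> ->]; rewrite xy.
case: (boolP (all (mem (L (inord 4))) (L (inord 5)))) => [A5|/allPn [y Hy Hy4]]; last first.
  have yc : y != c by apply: contraNneq Hy4 => ->.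
  have [g0 H0 N0] := P (inord 0) [:: c] isT.
  apply: (@complete _ _ HL _ _ _ Hc H0 Hy _ yc); [by move: N0; rewrite inE |].
  move=> g1 g3; have [x Hx Nx] := P (inord 4) [:: g0; g1; g3; c] isT.
  exists x => //; have xy : x != y by apply: contraNneq Hy4 => <-.
  by move: Nx; rewrite !inE !negb_or => /and4P[-> -> -> ->]; rewrite xy.
have [d H0 N0] := P (inord 0) [:: c] isT.
have E5 : L (inord 5) =i L (inord 4).
  apply: (uniq_min_size (HL _).1 _ _).2; first by move=> z Hz; apply: (allP A5).
  by rewrite (HL (inord 5)).2 (HL (inord 4)).2.
have H5 : d \in L (inord 5) by rewrite E5; apply: (allP A0).
have dc : d != c by move: N0; rewrite inE.
apply: (@complete _ _ HL _ _ _ Hc H0 H5 dc dc).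
move=> g1 g3; have [x Hx Nx] := P (inord 4) [:: d; g1; g3; c] isT.
exists x => //.
by move: Nx; rewrite !inE !negb_or => /and4P[-> -> -> ->].
Qed.
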